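(* Let $K$ be a division ring, $G$ a group, and suppose $a,b\in K[G]$, each of rank $\ge2$, satisfy $ab=1$. Then there is a subgroup $H$ of $G$ such that, letting $c=E^G_H(a)$ and $d=E^G_H(b)$: (i) $cd=1$; (ii) the ranks of $c$ and $d$ are both $\ge2$; (iii) the support of $c$ generates $H$; (iv) the support of $d$ generates $H$. Furthermore, if also $dc=1$, then $a=c$ and $b=d$.
   Context: $K[G]$ is the group ring; the support of an element is the set of group elements with nonzero coefficient and its rank is the cardinality of the support. For a subgroup $H\le G$, $E^G_H:K[G]\to K[H]$ is the $K$-linear map with $E^G_H(g)=g$ for $g\in H$ and $E^G_H(g)=0$ for $g\in G\setminus H$. *)

(* Defs.v *)
(* group rings K[G] over an arbitrary (possibly infinite) group G,
   elements are finitely supported functions G -> K (finmap's fsfun). *)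
From HB Require Import structures.
From mathcomp Require Import all_boot all_order all_algebra all_fingroup.
From mathcomp Require Import finmap.

Set Implicit Arguments.
Unset Strict Implicit.
Unset Printing Implicit Defensive.

Import GRing.Theory.
Local Open Scope fset_scope.
Local Open Scope ring_scope.

Section GroupRing.
Variables (K : unitRingType) (G : groupType).

Definition grpring := {fsfun G -> K with 0}.

Definition gsupp (a : grpring) : {fset G} := finsupp a.
Definition grank (a : grpring) : nat := #|` finsupp a|.

Definition gone : grpring := [fsfun g in [fset 1%g] => (1 : K) | 0].

Definition gmul (a b : grpring) : grpring :=
  [fsfun g in [fset (x * y)%g | x in finsupp a, y in finsupp b] =>
     \sum_(h <- finsupp a) a h * b (h^-1 * g)%g | 0].

(* E^G_H : K[G] -> K[H], with K[H] viewed inside K[G] *)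
Definition gproj (H : {pred G}) (a : grpring) : grpring :=
  [fsfun g in finsupp a => (if g \in H then a g else 0) | 0].

Definition generates (S : {fset G}) (H : {pred G}) : Prop :=
  [/\ group_closed H, {subset S <= H} &
      forall H' : {pred G}, group_closed H' -> {subset S <= H'} -> {subset H <= H'}].

End GroupRing.

(* Main.v *)
Require Import Defs.
From HB Require Import structures.
From mathcomp Require Import all_boot all_order all_algebra all_fingroup.
From mathcomp Require Import finmap.
From Stdlib Require Import ClassicalEpsilon.

Set Implicit Arguments.
Unset Strict Implicit.
Unset Printing Implicit Defensive.
Import GRing.Theory.
Local Open Scope fset_scope.
Local Open Scope ring_scope.

Section GR.
Variables (K : unitRingType) (G : groupType).
Notation A := (grpring K G).
Implicit Types (a b c : A).

Lemma gval0 (a : A) g : g \notin finsupp a -> a g = 0.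
Proof. by move=> h; rewrite fsfun_dflt. Qed.

Lemma gsuppP (a : A) g : a g != 0 -> g \in finsupp a.
Proof. by rewrite mem_finsupp. Qed.

Lemma sum_sup (s t : seq G) (F : G -> K) : uniq s -> uniq t ->
  (forall x, F x != 0 -> x \in s) -> (forall x, F x != 0 -> x \in t) ->
  \sum_(x <- s) F x = \sum_(x <- t) F x.
Proof.
move=> us ut Hs Ht.
have key : forall s t : seq G, uniq s -> uniq t -> (forall x, F x != 0 -> x \in t) ->
   \sum_(x <- s) F x = \sum_(x <- [seq y <- s | y \in t]) F x.
  move=> s1 t1 _ _ H1; rewrite big_filter [RHS]big_mkcond /=; apply: eq_bigr => x _.
  by case: ifP => // xt; apply/eqP; apply: contraFT xt => /H1.
rewrite (key s t us ut Ht) (key t s ut us Hs).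
apply: perm_big; apply: uniq_perm; rewrite ?filter_uniq //.
move=> x; rewrite !mem_filter; apply: andbC.
Qed.

Lemma gmulE a b (s : seq G) g : uniq s -> {subset finsupp a <= s} ->
  gmul a b g = \sum_(h <- s) a h * b (h^-1 * g)%g.
Proof.
move=> us sub; rewrite /gmul fsfunE.
have -> : \sum_(h <- finsupp a) a h * b (h^-1 * g)%g = \sum_(h <- s) a h * b (h^-1 * g)%g.
  apply: sum_sup => //; first exact: fset_uniq.
    by move=> x; apply: contraNT => /gval0 ->; rewrite mul0r.
  by move=> x; apply: contraNT => /(contra (sub x)) /gval0 ->; rewrite mul0r.
case: ifP => // gn; apply/esym/big1_seq => h /andP[_ hs].
have [ha|ha] := boolP (h \in finsupp a); last by rewrite gval0 ?mul0r.
have [hb|hb] := boolP ((h^-1 * g)%g \in finsupp b); last by rewrite (gval0 hb) mulr0.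
by move: gn; rewrite (_ : g = h * (h^-1 * g))%g ?in_imfset2 // mulVKg.
Qed.


Lemma goneE g : gone K G g = if g == 1%g then 1 else 0.
Proof. by rewrite /gone fsfunE in_fset1. Qed.

Lemma gprojE (H : {pred G}) a g : gproj H a g = if g \in H then a g else 0.
Proof.
rewrite /gproj fsfunE; case: ifP => // /negbT /gval0 ->; by case: ifP.
Qed.

Lemma supp_gproj (H : {pred G}) a g : g \in finsupp (gproj H a) -> g \in H /\ g \in finsupp a.
Proof. by rewrite mem_finsupp gprojE; case: ifP; rewrite ?eqxx // mem_finsupp. Qed.

Lemma sum_if_eq (t : seq G) (x : G) (f : G -> K) : uniq t ->
  \sum_(k <- t) (if k == x then f k else 0) = if x \in t then f x else 0.
Proof.
elim: t => [|y t IH] /=; first by rewrite big_nil.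
case/andP=> yt ut; rewrite big_cons IH // in_cons eq_sym.
case: eqP => [->|_] /=; last by rewrite add0r.
by rewrite (negPf yt) addr0.
Qed.

Lemma gmul1l a : gmul (gone K G) a = a.
Proof.
apply/fsfunP=> g; rewrite (@gmulE _ _ [:: 1%g]) //.
  by rewrite big_seq1 goneE eqxx mul1r invg1 mul1g.
by move=> h; rewrite mem_finsupp goneE inE; case: (h == 1%g); rewrite ?eqxx.
Qed.

Lemma gmul1r a : gmul a (gone K G) = a.
Proof.
apply/fsfunP=> g; rewrite (@gmulE _ _ (finsupp a)) ?fset_uniq //.
rewrite (eq_bigr (fun h => if h == g then a h else 0)); last first.
  move=> h _; rewrite goneE; have -> : ((h^-1 * g)%g == 1%g) = (h == g).
    by rewrite -(inj_eq (mulgI h)) mulVKg mulg1 eq_sym.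
  by case: eqP; rewrite ?mulr1 ?mulr0.
rewrite sum_if_eq ?fset_uniq //; case: (boolP (g \in finsupp a)) => // hg; by rewrite gval0.
Qed.

Lemma gmulA a b c : gmul (gmul a b) c = gmul a (gmul b c).
Proof.
apply/fsfunP=> g.
set X := [fset (x * y)%g | x in finsupp a, y in finsupp b].
have suppab : {subset finsupp (gmul a b) <= X}.
  move=> x; rewrite mem_finsupp /gmul fsfunE; case: ifP => //; by rewrite eqxx.
rewrite (@gmulE _ _ X) ?fset_uniq // (@gmulE _ _ (finsupp a)) ?fset_uniq //.
rewrite (eq_bigr (fun x => \sum_(h <- finsupp a) a h * b (h^-1 * x)%g * c (x^-1 * g)%g)); last first.
  move=> x _; rewrite (@gmulE _ _ (finsupp a)) ?fset_uniq // mulr_suml //.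
rewrite exchange_big /=; apply: eq_bigr => h _.
rewrite (@gmulE _ _ (finsupp b)) ?fset_uniq // mulr_sumr.
rewrite (@sum_sup X [seq (h * y)%g | y <- finsupp b]) ?fset_uniq //.
- rewrite big_map; apply: eq_bigr => y _.
  by rewrite mulKg invgM mulgA mulrA.
- by rewrite map_inj_uniq ?fset_uniq //; apply: mulgI.
- move=> x; have [ha|ha] := boolP (h \in finsupp a); last by rewrite gval0 ?mul0r ?mulr0 ?eqxx.
  have [hb|hb] := boolP ((h^-1 * x)%g \in finsupp b); last by rewrite (gval0 hb) mulr0 mul0r eqxx.
  by move=> _; rewrite (_ : x = h * (h^-1 * x))%g ?in_imfset2 // mulVKg.
- move=> x; have [hb|hb] := boolP ((h^-1 * x)%g \in finsupp b); last by rewrite (gval0 hb) mulr0 mul0r eqxx.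
  by move=> _; apply/mapP; exists (h^-1 * x)%g => //; rewrite mulVKg.
Qed.


Section Proj.
Variable L : {pred G}.
Hypothesis gcL : group_closed L.

Lemma memL_mul x y : x \in L -> y \in L -> (x * y)%g \in L.
Proof. exact: (group_closedM gcL). Qed.
Lemma memL_inv x : x \in L -> x^-1%g \in L.
Proof. exact: (group_closedV gcL). Qed.
Lemma memL_shift h g : h \in L -> ((h^-1 * g)%g \in L) = (g \in L).
Proof.
move=> hL; apply/idP/idP => H1.
  by rewrite -(mulVKg h g); apply: memL_mul.
by apply: memL_mul => //; apply: memL_inv.
Qed.
Lemma memL_shift' h g : g \in L -> ((h^-1 * g)%g \in L) = (h \in L).
Proof.
move=> gL; apply/idP/idP => H1.
  have -> : h = (g * (h^-1 * g)^-1)%g by rewrite invgM invgK mulgA mulgV mul1g.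
  by apply: memL_mul => //; apply: memL_inv.
by apply: memL_mul => //; apply: memL_inv.
Qed.

Lemma gprojMl a b : {subset finsupp a <= L} -> gproj L (gmul a b) = gmul a (gproj L b).
Proof.
move=> sa; apply/fsfunP=> g; rewrite gprojE !(@gmulE _ _ (finsupp a)) ?fset_uniq //.
case: ifP => gL.
  by apply: eq_big_seq => h /sa hL; rewrite gprojE memL_shift ?gL.
apply/esym/big1_seq => h /andP[_ /sa hL]; by rewrite gprojE memL_shift ?gL ?mulr0.
Qed.

Lemma gprojMr a b : {subset finsupp b <= L} -> gproj L (gmul a b) = gmul (gproj L a) b.
Proof.
move=> sb; apply/fsfunP=> g; rewrite gprojE !(@gmulE _ _ (finsupp a)) ?fset_uniq //; last first.
  by move=> h /supp_gproj [].
have Hb : forall h, h \notin L -> g \in L -> b (h^-1 * g)%g = 0.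
  move=> h hL gL; apply: gval0; apply: contra hL => /sb; by rewrite memL_shift'.
case: ifP => gL.
  apply: eq_bigr => h _; rewrite gprojE; case: ifP => // /negbT hL.
  by rewrite Hb // mulr0 mul0r.
apply/esym/big1 => h _; rewrite gprojE; case: ifP => hL; last by rewrite mul0r.
rewrite (@gval0 b) ?mulr0 //; apply/negP => /sb; by rewrite memL_shift ?gL.
Qed.

Lemma gprojK a : {subset finsupp a <= L} -> gproj L a = a.
Proof.
move=> sa; apply/fsfunP=> g; rewrite gprojE; case: ifP => // /negbT gL.
by rewrite gval0 //; apply: contra gL => /sa.
Qed.

Lemma gproj_one : gproj L (gone K G) = gone K G.
Proof.
apply: gprojK => g; rewrite mem_finsupp goneE; case: (g =P 1%g) => [->|]; last by rewrite eqxx.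
by case: gcL.
Qed.

End Proj.

Lemma gproj_comp (L H : {pred G}) a : {subset L <= H} -> gproj L (gproj H a) = gproj L a.
Proof.
move=> LH; apply/fsfunP=> g; rewrite !gprojE; case: ifP => // /LH gH; by rewrite gH.
Qed.

Definition mono (g : G) (k : K) : A := [fsfun x in [fset g] => k | 0].

Lemma monoE g k x : mono g k x = if x == g then k else 0.
Proof. by rewrite /mono fsfunE in_fset1. Qed.

Lemma gmul_mono g k h l : gmul (mono g k) (mono h l) = mono (g * h)%g (k * l).
Proof.
apply/fsfunP=> x; rewrite (@gmulE _ _ [:: g]) //.
  rewrite big_seq1 !monoE eqxx.
  have -> : ((g^-1 * x)%g == h) = (x == g * h)%g.
    by rewrite -(inj_eq (mulgI g)) mulVKg.
  by case: ifP; rewrite ?mulr0.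
by move=> y; rewrite mem_finsupp monoE inE; case: (y == g); rewrite ?eqxx.
Qed.

Lemma mono_supp1 a g : finsupp a = [fset g] -> a = mono g (a g).
Proof.
move=> sa; apply/fsfunP=> x; rewrite monoE; case: eqP => [->//|/eqP xg].
by rewrite gval0 // sa in_fset1.
Qed.

End GR.

Definition pb (P : Prop) : bool := if excluded_middle_informative P then true else false.
Lemma pbP (P : Prop) : reflect P (pb P).
Proof. by rewrite /pb; case: excluded_middle_informative => h; constructor. Qed.

Section Gen.
Variable G : groupType.
Definition gen (S : {fset G}) : {pred G} :=
  fun g => pb (forall H' : {pred G}, group_closed H' -> {subset S <= H'} -> g \in H').

Lemma mem_gen S g : g \in gen S <-> (forall H' : {pred G}, group_closed H' -> {subset S <= H'} -> g \in H').
Proof. by rewrite unfold_in /gen; split => /pbP. Qed.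

Lemma gen_closed S : group_closed (gen S).
Proof.
split; first by apply/mem_gen => H [].
move=> u v /mem_gen hu /mem_gen hv; apply/mem_gen => H gH sH.
by case: (gH) => _; apply; [apply: hu | apply: hv].
Qed.

Lemma gen_sub S : {subset S <= gen S}.
Proof. by move=> x xS; apply/mem_gen => H _; apply. Qed.

Lemma gen_min S (H : {pred G}) : group_closed H -> {subset S <= H} -> {subset gen S <= H}.
Proof. by move=> gH sH x /mem_gen; apply. Qed.

Lemma generates_gen S (H : {pred G}) : H =i gen S -> generates S H.
Proof.
move=> eH; split.
- split; first by rewrite eH; case: (gen_closed S).
  by move=> u v; rewrite !eH; case: (gen_closed S) => _; apply.
- by move=> x /gen_sub; rewrite eH.
- by move=> H' gH' sH' x; rewrite eH; apply: gen_min.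
Qed.
End Gen.

Section Main.
Variables (K : unitRingType) (G : groupType).
Hypothesis hK : forall x : K, x != 0 -> x \is a GRing.unit.
Variables a b : grpring K G.
Hypothesis ab1 : gmul a b = gone K G.
Let U := finsupp a `|` finsupp b.

Definition Good (H : {pred G}) :=
  [/\ group_closed H, exists2 S : {fset G}, S `<=` U & H =i gen S,
      gmul (gproj H a) (gproj H b) = gone K G &
      (gmul (gproj H b) (gproj H a) = gone K G -> a = gproj H a /\ b = gproj H b)].

Definition cnt (H : {pred G}) := #|` [fset x in U | x \in H]|.

Lemma cnt_lt (H : {pred G}) (T : {fset G}) : Good H -> T `<=` U -> {subset T <= H} ->
  ~ (H =i gen T) -> (cnt (gen T) < cnt H)%N.
Proof.
case=> gH [S SU eH] _ _ TU TH neq.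
have LH : {subset gen T <= H} := gen_min gH TH.
have sub : [fset x in U | x \in gen T] `<=` [fset x in U | x \in H].
  by apply/fsubsetP => x; rewrite !inE => /andP[-> /LH ->].
rewrite ltnNge; apply/negP => le.
have eq : [fset x in U | x \in gen T] = [fset x in U | x \in H].
  by apply/eqP; rewrite eqEfcard sub le.
apply: neq => x; apply/idP/idP => [|/LH //].
rewrite eH; apply: gen_min; first exact: gen_closed.
move=> s sS.
have : s \in [fset x in U | x \in H].
  by rewrite !inE /= -in_fsetU (fsubsetP SU) //= eH gen_sub.
by rewrite -eq !inE /= => /andP[].
Qed.


Lemma good0 : Good (gen (finsupp a)).
Proof.
have gc := gen_closed (finsupp a).
have ca : gproj (gen (finsupp a)) a = a by apply: gprojK => //; apply: gen_sub.
split => //.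
- by exists (finsupp a); [rewrite /U fsubsetUl | ].
- by rewrite ca -gprojMl //; [rewrite ab1 gproj_one | apply: gen_sub].
- rewrite ca => da; split => //.
  by rewrite -{1}[b]gmul1l -da gmulA ab1 gmul1r.
Qed.

Lemma goodL H : Good H -> Good (gen (finsupp (gproj H a))).
Proof.
case=> gH [S SU eH] cd inv.
set L := gen _.
have gL : group_closed L := gen_closed _.
have sL : {subset finsupp (gproj H a) <= L} := gen_sub (S := finsupp (gproj H a)).
have LH : {subset L <= H}.
  by apply: gen_min => // x /supp_gproj [].
have cL : gproj L a = gproj H a by rewrite -(gproj_comp _ LH) gprojK.
have dL : gproj L b = gproj L (gproj H b) by rewrite gproj_comp.
have cdL : gmul (gproj L a) (gproj L b) = gone K G.
  by rewrite cL dL -gprojMl // cd gproj_one.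
split => //.
- exists (finsupp (gproj H a)) => [|//]; apply/fsubsetP => x /supp_gproj [_ xa].
  by rewrite in_fsetU xa.
- rewrite cL => dc.
  have e : gproj L b = gproj H b.
    by rewrite -[gproj L b]gmul1r -cd -gmulA dc gmul1l.
  by rewrite e; apply: inv; rewrite -e.
Qed.

Lemma goodM H : Good H -> Good (gen (finsupp (gproj H b))).
Proof.
case=> gH [S SU eH] cd inv.
set M := gen _.
have gM : group_closed M := gen_closed _.
have sM : {subset finsupp (gproj H b) <= M} := gen_sub (S := finsupp (gproj H b)).
have MH : {subset M <= H}.
  by apply: gen_min => // x /supp_gproj [].
have dM : gproj M b = gproj H b by rewrite -(gproj_comp _ MH) gprojK.
have cM : gproj M a = gproj M (gproj H a) by rewrite gproj_comp.
have cdM : gmul (gproj M a) (gproj M b) = gone K G.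
  by rewrite cM dM -gprojMr // cd gproj_one.
split => //.
- exists (finsupp (gproj H b)) => [|//]; apply/fsubsetP => x /supp_gproj [_ xb].
  by rewrite in_fsetU xb orbT.
- rewrite dM => dc.
  have e : gproj M a = gproj H a.
    by rewrite -[gproj M a]gmul1l -cd gmulA dc gmul1r.
  by rewrite e; apply: inv; rewrite -e.
Qed.

Lemma descend n H : Good H -> (cnt H < n)%N ->
  exists H', [/\ Good H', H' =i gen (finsupp (gproj H' a)) & H' =i gen (finsupp (gproj H' b))].
Proof.
elim: n H => [|n IH] H gH //.
rewrite ltnS => le.
have gH' := gH; case: gH' => gcH [S SU eH] _ _.
case: (excluded_middle_informative (H =i gen (finsupp (gproj H a)))) => [ea|na].
  case: (excluded_middle_informative (H =i gen (finsupp (gproj H b)))) => [eb|nb].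
    by exists H.
  apply: (IH _ (goodM gH)); apply: leq_trans le; apply: cnt_lt => //.
    by apply/fsubsetP => x /supp_gproj [_ xb]; rewrite in_fsetU xb orbT.
  by move=> x /supp_gproj [].
apply: (IH _ (goodL gH)); apply: leq_trans le; apply: cnt_lt => //.
  by apply/fsubsetP => x /supp_gproj [_ xa]; rewrite in_fsetU xa.
by move=> x /supp_gproj [].
Qed.

End Main.

Lemma supp_ne0l (K : unitRingType) (G : groupType) (x y : grpring K G) :
  gmul x y = gone K G -> finsupp x != fset0.
Proof.
move=> e; apply/negP => /eqP e0.
have := congr1 (fun f : grpring K G => f 1%g) e.
rewrite (@gmulE _ _ _ _ [::]) // ?big_nil ?goneE ?eqxx; last by rewrite e0.
by move/eqP; rewrite eq_sym oner_eq0.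
Qed.

Lemma supp_ne0r (K : unitRingType) (G : groupType) (x y : grpring K G) :
  gmul x y = gone K G -> finsupp y != fset0.
Proof.
move=> e; apply/negP => /eqP e0.
have := congr1 (fun f : grpring K G => f 1%g) e.
rewrite (@gmulE _ _ _ _ (finsupp x)) ?fset_uniq // big1 ?goneE ?eqxx.
  by move/eqP; rewrite eq_sym oner_eq0.
by move=> h _; rewrite (@gval0 _ _ y) ?mulr0 // e0.
Qed.

Lemma mono_inv (K : unitRingType) (G : groupType) (g : G) (k : K) : k \is a GRing.unit ->
  gmul (mono g^-1 k^-1) (mono g k) = gone K G /\ gmul (mono g k) (mono g^-1 k^-1) = gone K G.
Proof.
by move=> ku; rewrite !gmul_mono mulVg mulgV mulVr ?mulrV.
Qed.

Theorem proposition2p3 (K : unitRingType) (G : groupType)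
  (hK : forall x : K, x != 0 -> x \is a GRing.unit)
  (a b : grpring K G) :
  (2 <= grank a)%N -> (2 <= grank b)%N -> gmul a b = gone K G ->
  exists H : {pred G},
    group_closed H /\
    [/\ gmul (gproj H a) (gproj H b) = gone K G,
        (2 <= grank (gproj H a))%N /\ (2 <= grank (gproj H b))%N,
        generates (gsupp (gproj H a)) H,
        generates (gsupp (gproj H b)) H &
        (gmul (gproj H b) (gproj H a) = gone K G ->
           a = gproj H a /\ b = gproj H b)].
Proof.
move=> ra rb ab1.
have [H [[gH _ cd inv] ea eb]] := descend (good0 ab1) (ltnSn _).
exists H; split => //; split => //; last 2 first.
- exact: generates_gen.
- exact: generates_gen.
set c := gproj H a; set d := gproj H b.
have two : forall x : grpring K G, finsupp x != fset0 -> grank x != 1%N -> (2 <= grank x)%N.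
  move=> x ne n1; rewrite /grank ltnNge; apply/negP; rewrite leq_eqVlt ltnS leqn0.
  by case/orP => /eqP; [move/eqP: n1 | move/cardfs0_eq => /eqP; move/negP: ne].
split; apply: two.
- exact: supp_ne0l cd.
- apply/negP => /cardfs1P [g sg].
  have cm := mono_supp1 sg.
  have k0 : c g != 0 by rewrite -mem_finsupp sg in_fset1.
  have [l r] := @mono_inv _ _ g _ (hK _ k0).
  have dm : d = mono g^-1 (c g)^-1 by rewrite -[d]gmul1l -l -cm gmulA cd gmul1r.
  have [ac _] : a = c /\ b = d by apply: inv; rewrite -/c -/d dm {2}cm.
  by move: ra; rewrite ac /grank sg cardfs1.
- exact: supp_ne0r cd.
- apply/negP => /cardfs1P [g sg].
  have dm := mono_supp1 sg.
  have k0 : d g != 0 by rewrite -mem_finsupp sg in_fset1.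
  have [l r] := @mono_inv _ _ g _ (hK _ k0).
  have cm : c = mono g^-1 (d g)^-1 by rewrite -[c]gmul1r -r -dm -gmulA cd gmul1l.
  have [_ bd] : a = c /\ b = d by apply: inv; rewrite -/c -/d cm {1}dm.
  by move: rb; rewrite bd /grank sg cardfs1.
Qed.
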